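(* For every integer $n\ge1$, the complete graph $K_{2n}$ is map-rich.
   Context: A map is a triple $M=(C_M,v_M,f_M)$ where $C_M$ is a finite cubic graph (multiple edges allowed) and $v_M,f_M$ are disjoint perfect matchings whose union is a disjoint union of 4-cycles, the squares ($SQ(M)$). $a_M=E(C_M)\setminus(v_M\cup f_M)$; $z_M$ is the matching of square diagonals; $Q_M=C_M\cup z_M$. For a map $X$, $G_X$ has vertices the cycles of $v_X\cup a_X$ and edges the squares, each square joining the cycles containing its two $v_X$-edges. The dual is $D=(C_M,f_M,v_M)$, the phial $P=(Q_M\setminus v_M,z_M,f_M)$; edge sets of $G_M,G_D,G_P$ are identified with $SQ(M)$, and $V,F,Z$ denote their $GF(2)$-coboundary spaces, $V^\perp$ the cycle space of $G_M$. $M$ is rich if $V^\perp=F+Z$. A graph $G$ is map-rich if $G\cong G_M$ for some rich map $M$. *)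

(* Defs.v *)
From mathcomp Require Import all_boot.
Set Implicit Arguments. Unset Strict Implicit. Unset Printing Implicit Defensive.

(* A map M = (C_M, v_M, f_M) is encoded by its vertex set T and the three
   perfect matchings v_M, f_M, a_M of the cubic multigraph C_M, each given as
   a fixed-point-free involution of T (the partner of a vertex along its
   v-, f-, resp. a-edge).  Since a cubic graph whose edges contain two disjoint
   perfect matchings has no loops, the remaining edges a_M form a third
   perfect matching, and C_M is recovered as the edge-disjoint union
   v_M + f_M + a_M (parallel edges allowed). *)

Section Maps.
Variable T : finType.

Definition fpf_involution (g : T -> T) := (forall x, g (g x) = x) /\ (forall x, g x != x).

(* v_M, f_M disjoint perfect matchings whose union is a disjoint union of 4-cycles *)
Definition is_map (v f a : T -> T) :=
  [/\ fpf_involution v, fpf_involution f, fpf_involution a &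
      forall x, v x != f x /\ v (f x) = f (v x)].

Definition rel2 (g h : T -> T) : rel T := fun x y => (y == g x) || (y == h x).

Definition sq (vX fX : T -> T) (x : T) : {set T} := [set y | connect (rel2 vX fX) x y].
(* the edge set SQ(X) of G_X *)
Definition SQ (vX fX : T -> T) : {set {set T}} := [set sq vX fX x | x in T].
(* the cycle of vX \cup aX containing x (a vertex of G_X) *)
Definition cyc (vX aX : T -> T) (x : T) : {set T} := [set y | connect (rel2 vX aX) x y].
Definition verts (vX aX : T -> T) : {set {set T}} := [set cyc vX aX x | x in T].
(* The square sq vX fX x has vX-edges {x, vX x} and {fX x, vX (fX x)}, hence
   joins the vertices cyc vX aX x and cyc vX aX (fX x) of G_X. *)

(* GF(2)-coboundary of a vertex set W of G_X: edges with exactly one end in W.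
   Edge sets are subsets of SQ(X); GF(2)-addition is symmetric difference. *)
Definition cobound (vX fX aX : T -> T) (W : {set {set T}}) : {set {set T}} :=
  [set sq vX fX x | x in T & (cyc vX aX x \in W) != (cyc vX aX (fX x) \in W)].

Definition cobspace (vX fX aX : T -> T) : {set {set {set T}}} :=
  [set cobound vX fX aX W | W : {set {set T}}].

Definition orth (E : {set {set T}}) (S : {set {set {set T}}}) : {set {set {set T}}} :=
  [set A : {set {set T}} | (A \subset E) && [forall B in S, ~~ odd #|A :&: B|]].

Definition symdiff (A B : {set {set T}}) : {set {set T}} := (A :\: B) :|: (B :\: A).

Definition addsp (S1 S2 : {set {set {set T}}}) : {set {set {set T}}} :=
  [set symdiff A B | A in S1, B in S2].

(* M rich: V^perp = F + Z, where V, F, Z are the coboundary spaces of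
   G_M (map (v,f), third matching a), G_D (D = (C_M, f, v), third matching a)
   and G_P (P = (Q_M \ v_M, z, f), third matching a, z = square diagonals).
   Note sq v f = sq f v = sq z f, so the three edge sets are literally SQ v f. *)
Definition zdiag (v f : T -> T) : T -> T := fun x => v (f x).

Definition rich (v f a : T -> T) :=
  orth (SQ v f) (cobspace v f a) =
  addsp (cobspace f v a) (cobspace (zdiag v f) f a).

(* G_M is isomorphic to the complete graph K_k (vertices 'I_k, edges the
   2-subsets of 'I_k, each edge incident to its two elements). *)
Definition iso_complete (v f a : T -> T) (k : nat) :=
  exists (phV : {set T} -> 'I_k) (phE : {set T} -> {set 'I_k}),
  [/\ {in verts v a &, injective phV},
      forall i : 'I_k, exists2 c, c \in verts v a & phV c = i,
      {in SQ v f &, injective phE},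
      forall S : {set 'I_k}, #|S| = 2 -> exists2 s, s \in SQ v f & phE s = S &
      forall x, #|phE (sq v f x)| = 2 /\
                phE (sq v f x) = [set phV (cyc v a x); phV (cyc v a (f x))]].

End Maps.

Definition complete_map_rich (k : nat) :=
  exists (m : nat) (v f a : 'I_m -> 'I_m),
    [/\ is_map v f a, rich v f a & iso_complete v f a k].

(* Main.v *)
Require Import Defs.
From mathcomp Require Import all_boot.
From mathcomp Require Import zify.
Set Implicit Arguments. Unset Strict Implicit. Unset Printing Implicit Defensive.

Section Gen0.
Variable T : finType.
Implicit Types (g h : T -> T) (P : pred T).

Lemma inv_connect g h P : (forall x, P (g x) = P x) -> (forall x, P (h x) = P x) ->
  forall x y, connect (rel2 g h) x y -> P x = P y.
Proof.
move=> Hg Hh x y.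
have cl : closed (rel2 g h) P.
  by move=> u w; rewrite /rel2 => /orP[]/eqP->; rewrite /in_mem /= ?Hg ?Hh.
by move/(closed_connect cl).
Qed.

Lemma mem_sqset g h P y : (forall x, P (g x) = P x) -> (forall x, P (h x) = P x) ->
  (sq g h y \in [set sq g h x | x in T & P x]) = P y.
Proof.
move=> Hg Hh; apply/imsetP/idP => [[x]|Py]; last by exists y; rewrite ?inE.
rewrite inE => Px E.
have : y \in sq g h x by rewrite -E inE connect0.
by rewrite inE => /(inv_connect Hg Hh) <-.
Qed.

Lemma cyc_l g h x : (forall x, g (g x) = x) -> cyc g h (g x) = cyc g h x.
Proof.
move=> Hg; apply/setP => y; rewrite !inE.
have c1 : connect (rel2 g h) (g x) x by apply: connect1; rewrite /rel2 Hg eqxx.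
have c2 : connect (rel2 g h) x (g x) by apply: connect1; rewrite /rel2 eqxx.
by apply/idP/idP => H; [apply: connect_trans c2 H | apply: connect_trans c1 H].
Qed.

Lemma cyc_r g h x : (forall x, h (h x) = x) -> cyc g h (h x) = cyc g h x.
Proof.
move=> Hh; apply/setP => y; rewrite !inE.
have c1 : connect (rel2 g h) (h x) x by apply: connect1; rewrite /rel2 Hh eqxx orbT.
have c2 : connect (rel2 g h) x (h x) by apply: connect1; rewrite /rel2 eqxx orbT.
by apply/idP/idP => H; [apply: connect_trans c2 H | apply: connect_trans c1 H].
Qed.

Lemma sq_swap g h x : sq h g x = sq g h x.
Proof. by apply/setP => y; rewrite !inE; apply: eq_connect => u w; rewrite /rel2 orbC. Qed.

Lemma sq_z (v f : T -> T) x : (forall x, v (v x) = x) -> (forall x, f (f x) = x) ->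
  (forall x, v (f x) = f (v x)) -> sq (zdiag v f) f x = sq v f x.
Proof.
move=> Hv Hf Hvf; apply/setP => y; rewrite !inE; apply/idP/idP; apply: connect_sub => u w;
  rewrite /rel2 /zdiag => /orP[]/eqP->.
- apply: (@connect_trans _ _ (f u)); apply: connect1; by rewrite /rel2 ?eqxx ?orbT.
- by apply: connect1; rewrite /rel2 eqxx orbT.
- apply: (@connect_trans _ _ (f u)); apply: connect1; rewrite /rel2 /zdiag ?eqxx ?orbT //.
  by rewrite Hf eqxx.
- by apply: connect1; rewrite /rel2 eqxx orbT.
Qed.

Lemma in_symdiff (A B : {set {set T}}) s : (s \in symdiff A B) = (s \in A) (+) (s \in B).
Proof. by rewrite /symdiff !inE; case: (s \in A); case: (s \in B). Qed.

Lemma symdiffA (A B C : {set {set T}}) : symdiff (symdiff A B) C = symdiff A (symdiff B C).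
Proof. by apply/setP => s; rewrite !in_symdiff addbA. Qed.

Lemma symdiffC (A B : {set {set T}}) : symdiff A B = symdiff B A.
Proof. by apply/setP => s; rewrite !in_symdiff addbC. Qed.

Lemma symdiffK (A B : {set {set T}}) : symdiff (symdiff A B) B = A.
Proof. by apply/setP => s; rewrite !in_symdiff -addbA addbb addbF. Qed.

Lemma symdiff_odd (A B C : {set {set T}}) :
  odd #|symdiff A B :&: C| = odd #|A :&: C| (+) odd #|B :&: C|.
Proof.
set A' := A :&: C; set B' := B :&: C.
have -> : symdiff A B :&: C = (A' :\: B') :|: (B' :\: A').
  by apply/setP => s; rewrite /symdiff /A' /B' !inE; case: (s \in A); case: (s \in B); case: (s \in C).
rewrite cardsU.
have -> : (A' :\: B') :&: (B' :\: A') = set0.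
  by apply/setP => s; rewrite !inE; case: (s \in A); case: (s \in B); case: (s \in C).
rewrite (eqP (introT eqP (cards0 _))) subn0.
have e1 := cardsID B' A'; have e2 := cardsID A' B'.
rewrite setIC in e2.
rewrite -e1 -e2 !oddD.
by case: (odd #|A' :\: B'|); case: (odd #|B' :\: A'|); case: (odd #|A' :&: B'|).
Qed.

Lemma even_invol g (S : {set T}) : (forall x, g (g x) = x) -> (forall x, g x != x) ->
  (forall x, x \in S -> g x \in S) -> ~~ odd #|S|.
Proof.
move=> Hgg Hg1 HS.
move: {2}#|S| (leqnn #|S|) => k; elim: k S HS => [|k IH] S HS.
  by rewrite leqn0 => /eqP ->.
move=> Hk.
case: (set_0Vmem S) => [->|[x xS]]; first by rewrite cards0.
set S' := S :\: [set x; g x].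
have HS' : forall y, y \in S' -> g y \in S'.
  move=> y; rewrite !inE => /andP[H1 H2]; rewrite HS // andbT.
  apply: contra H1 => /orP[]/eqP E.
  - by rewrite -(Hgg y) E eqxx orbT.
  - by rewrite -(Hgg y) E Hgg eqxx.
have cS : #|S| = #|S'| + 2.
  rewrite -(cardsID [set x; g x] S) /S' addnC; congr (_ + _).
  have -> : S :&: [set x; g x] = [set x; g x].
    by apply/setIidPr; apply/subsetP => y; rewrite !inE => /orP[]/eqP->; rewrite ?HS.
  by rewrite cards2 eq_sym Hg1.
rewrite cS addn2 !oddS negbK; apply: IH HS' _; move: Hk; rewrite cS; lia.
Qed.

End Gen0.


Section Gen.
Variable T : finType.
Variables v f a : T -> T.
Hypothesis Hmap : is_map v f a.

Let Hvv : forall x, v (v x) = x. Proof. by case: Hmap => [[]]. Qed.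
Let Hv1 : forall x, v x != x. Proof. by case: Hmap => [[]]. Qed.
Let Hff : forall x, f (f x) = x. Proof. by case: Hmap => _ []. Qed.
Let Hf1 : forall x, f x != x. Proof. by case: Hmap => _ []. Qed.
Let Haa : forall x, a (a x) = x. Proof. by case: Hmap => _ _ []. Qed.
Let Ha1 : forall x, a x != x. Proof. by case: Hmap => _ _ []. Qed.
Let Hvf : forall x, v (f x) = f (v x). Proof. by case: Hmap => _ _ _ H x; case: (H x). Qed.

Local Notation z := (zdiag v f).
Let Hzz : forall x, z (z x) = x. Proof. by move=> x; rewrite /zdiag -Hvf Hvv Hff. Qed.
Let Hz1 : forall x, z x != x.
Proof. move=> x; rewrite /zdiag; apply/eqP => E. by case: Hmap => _ _ _ H; case: (H x) => /eqP H1 _; apply: H1; rewrite -{1}E Hvv. Qed.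

Lemma sq_v x : sq v f (v x) = sq v f x. Proof. by apply: cyc_l. Qed.
Lemma sq_f x : sq v f (f x) = sq v f x. Proof. by apply: cyc_r. Qed.

Lemma sqset_eq (P1 P2 : pred T) : (forall x, P1 x = P2 x) ->
  [set sq v f x | x in T & P1 x] = [set sq v f x | x in T & P2 x].
Proof.
move=> H; apply/setP=> s; apply/imsetP/imsetP => [][x]; rewrite inE => Hx ->;
  by exists x; rewrite // inE ?H // -H.
Qed.

Lemma sqset_sub (P : pred T) : [set sq v f x | x in T & P x] \subset SQ v f.
Proof. by apply/subsetP => s /imsetP[x _ ->]; apply: imset_f. Qed.

Lemma sqset_xor (P1 P2 : pred T) :
  (forall x, P1 (v x) = P1 x) -> (forall x, P1 (f x) = P1 x) ->
  (forall x, P2 (v x) = P2 x) -> (forall x, P2 (f x) = P2 x) ->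
  symdiff [set sq v f x | x in T & P1 x] [set sq v f x | x in T & P2 x] =
  [set sq v f x | x in T & P1 x (+) P2 x].
Proof.
move=> H1v H1f H2v H2f; apply/setP => s; rewrite in_symdiff.
case: (pickP (fun y => s == sq v f y)) => [y /eqP->|H].
  rewrite !mem_sqset //; by move=> x; rewrite ?H1v ?H1f ?H2v ?H2f.
have nin : forall P : pred T, s \in [set sq v f x | x in T & P x] = false.
  by move=> P; apply/imsetP => [][x _ E]; move: (H x); rewrite E eqxx.
by rewrite !nin.
Qed.

Definition pV (W : {set {set T}}) x := cyc v a x \in W.
Definition pD (W : {set {set T}}) x := cyc f a x \in W.
Definition pZ (W : {set {set T}}) x := cyc z a x \in W.

Lemma pV_v W x : pV W (v x) = pV W x. Proof. by rewrite /pV cyc_l. Qed.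
Lemma pV_a W x : pV W (a x) = pV W x. Proof. by rewrite /pV cyc_r. Qed.
Lemma pD_f W x : pD W (f x) = pD W x. Proof. by rewrite /pD cyc_l. Qed.
Lemma pD_a W x : pD W (a x) = pD W x. Proof. by rewrite /pD cyc_r. Qed.
Lemma pZ_z W x : pZ W (z x) = pZ W x. Proof. by rewrite /pZ cyc_l. Qed.
Lemma pZ_a W x : pZ W (a x) = pZ W x. Proof. by rewrite /pZ cyc_r. Qed.
Lemma pZ_f W x : pZ W (f x) = pZ W (v x).
Proof. by rewrite -(pZ_z W (v x)) /zdiag Hvf Hvv. Qed.

Lemma coboundV W : cobound v f a W = [set sq v f x | x in T & pV W x != pV W (f x)].
Proof. by []. Qed.

Lemma coboundD W : cobound f v a W = [set sq v f x | x in T & pD W x != pD W (v x)].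
Proof. by rewrite /cobound; apply: eq_imset => x; rewrite sq_swap. Qed.

Lemma coboundZ W : cobound z f a W = [set sq v f x | x in T & pZ W x != pZ W (v x)].
Proof.
rewrite /cobound (eq_imset _ (fun x => sq_z x Hvv Hff Hvf)).
by apply: sqset_eq => x; rewrite -/(pZ W x) -/(pZ W (f x)) pZ_f.
Qed.

Lemma parity (p q : pred T) (g : T -> T) :
  (forall x, p (v x) = p x) -> (forall x, p (a x) = p x) -> (forall x, q (a x) = q x) ->
  (forall x, g (g x) = x) -> (forall x, g x != x) ->
  (forall x, p (g x) = p (f x)) -> (forall x, p (f (g x)) = p x) -> (forall x, q (g x) = q x) ->
  (forall x, (q (f x) != q (v (f x))) = (q x != q (v x))) ->
  ~~ odd #|[set sq v f x | x in T & p x != p (f x)] :&: [set sq v f x | x in T & q x != q (v x)]|.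
Proof.
move=> Hpv Hpa Hqa Hgg Hg1 Hpg Hpfg Hqg Hqf.
pose cV x := p x != p (f x); pose cQ x := q x != q (v x).
have cVv : forall x, cV (v x) = cV x by move=> x; rewrite /cV Hpv -Hvf Hpv.
have cVf : forall x, cV (f x) = cV x by move=> x; rewrite /cV Hff eq_sym.
have cQv : forall x, cQ (v x) = cQ x by move=> x; rewrite /cQ Hvv eq_sym.
have cQf : forall x, cQ (f x) = cQ x by move=> x; rewrite /cQ Hqf.
have -> : [set sq v f x | x in T & p x != p (f x)] :&: [set sq v f x | x in T & q x != q (v x)]
        = [set sq v f x | x in T & cV x && cQ x].
  apply/setP => s; rewrite inE; apply/andP/imsetP.
    case=> /imsetP[x]; rewrite inE => /andP[_ Hx] -> H2; exists x => //; rewrite inE /=.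
    by rewrite /cV Hx /=; move: H2; rewrite (mem_sqset _ cQv cQf).
  case=> x; rewrite inE => /andP[_ /andP[H1 H2]] ->.
  by rewrite (mem_sqset _ cQv cQf) (mem_sqset _ cVv cVf) H1 H2.
pose Y1 := [set x | [&& p x, q x, cV x & cQ x]].
have -> : [set sq v f x | x in T & cV x && cQ x] = [set sq v f x | x in Y1].
  apply/setP => s; apply/imsetP/imsetP => [][x]; rewrite inE; last first.
    by case/and4P => _ _ H1 H2 ->; exists x; rewrite // inE H1.
  case/and3P => _ H1 H2 ->.
  have H2' : q (f x) != q (v (f x)) by rewrite Hqf.
  case Px: (p x).
    case Qx: (q x).
      by exists x; rewrite // inE Px Qx H1.
    exists (v x); last by rewrite sq_v.
    rewrite inE Hpv Px cVv cQv H1 H2 /= andbT.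
    by move: H2; rewrite /cQ Qx; case: (q (v x)).
  have Pfx : p (f x) by move: H1; rewrite /cV Px; case: (p (f x)).
  case Qfx: (q (f x)).
    by exists (f x); rewrite ?sq_f // inE Pfx Qfx cVf cQf H1 H2.
  exists (v (f x)); last by rewrite sq_v sq_f.
  rewrite inE Hpv Pfx cVv cQv cVf cQf H1 H2 /= andbT.
  by move: H2'; rewrite Qfx; case: (q (v (f x))).
have symr : symmetric (rel2 v f).
  move=> u w; rewrite /rel2; apply/idP/idP => /orP[]/eqP->; rewrite ?Hvv ?Hff eqxx ?orbT //.
rewrite card_in_imset; last first.
  move=> x y; rewrite !inE => /and4P[px qx cvx cqx] /and4P[py qy _ _] E.
  have : y \in sq v f x by rewrite E inE connect0.
  rewrite inE.
  pose S4 := [set x; v x; f x; v (f x)].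
  have cl : closed (rel2 v f) (mem S4).
    apply: intro_closed; first exact: sym_connect_sym.
    move=> u w; rewrite /rel2 /S4 !inE -!orbA => /orP[]/eqP-> /or4P[]/eqP->;
      by rewrite ?Hvv ?Hff -?Hvf ?Hff ?Hvv ?eqxx ?orbT.
  move/(closed_connect cl); rewrite /S4 !inE -!orbA eqxx /= => /esym /or4P[]/eqP E4 //.
  - by move: cqx; rewrite /cQ -E4 qx qy.
  - by move: cvx; rewrite /cV -E4 px py.
  - by move: cvx; rewrite /cV -(Hpv (f x)) -E4 px py.
pose U := [set x | p x && q x]; pose CV := [set x | cV x]; pose CQ := [set x | cQ x].
have e1 := cardsID CV U; have e2 := cardsID CQ (U :&: CV).
have -> : Y1 = (U :&: CV) :&: CQ.
  by apply/setP => x; rewrite !inE -!andbA.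
have o1 : ~~ odd #|U|.
  apply: (even_invol Haa Ha1) => x; rewrite !inE => /andP[H1 H2]; by rewrite Hpa Hqa H1 H2.
have o2 : ~~ odd #|U :\: CV|.
  apply: (even_invol Hgg Hg1) => x; rewrite !inE => /andP[/negPn H1 /andP[H2 H3]].
  by rewrite /cV in H1 *; rewrite Hpg Hpfg Hqg H3 -(eqP H1) H2 eqxx.
have o3 : ~~ odd #|(U :&: CV) :\: CQ|.
  apply: (even_invol Hvv Hv1) => x; rewrite !inE => /and3P[H1 /andP[H2 H3] H4].
  rewrite cQv cVv Hpv H1 H2 H4 /= andbT.
  by move: H1; rewrite /cQ negbK => /eqP <-.
move: o1 o2 o3; rewrite -e1 -e2 !oddD.
by case: (odd #|U :&: CV :&: CQ|); case: (odd #|U :&: CV :\: CQ|); case: (odd #|U :\: CV|).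
Qed.

Lemma FV_even W1 W2 : ~~ odd #|cobound f v a W1 :&: cobound v f a W2|.
Proof.
rewrite coboundD coboundV setIC.
apply: (@parity (pV W2) (pD W1) f) => // x.
- exact: pV_v.
- exact: pV_a.
- exact: pD_a.
- by rewrite Hff.
- exact: pD_f.
- by rewrite pD_f Hvf pD_f.
Qed.

Lemma ZV_even W1 W2 : ~~ odd #|cobound z f a W1 :&: cobound v f a W2|.
Proof.
rewrite coboundZ coboundV setIC.
apply: (@parity (pV W2) (pZ W1) z) => // x.
- exact: pV_v.
- exact: pV_a.
- exact: pZ_a.
- by rewrite /zdiag pV_v.
- by rewrite /zdiag -Hvf pV_v Hff.
- exact: pZ_z.
- by rewrite pZ_f -/(z x) pZ_z eq_sym.
Qed.

Lemma addsp_orth A : A \in addsp (cobspace f v a) (cobspace z f a) ->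
  A \in orth (SQ v f) (cobspace v f a).
Proof.
case/imset2P => X Y /imsetP[W1 _ ->] /imsetP[W2 _ ->] ->.
rewrite inE; apply/andP; split.
  apply/subsetP => s; rewrite in_symdiff coboundD coboundZ.
  case E: (s \in [set sq v f x | x in T & pD W1 x != pD W1 (v x)]) => /= H.
    by apply: (subsetP (sqset_sub _)) E.
  by apply: (subsetP (sqset_sub _)) H.
apply/forall_inP => B /imsetP[W _ ->].
by rewrite symdiff_odd (negbTE (FV_even _ _)) (negbTE (ZV_even _ _)).
Qed.

Lemma orth_symdiff A1 A2 : A1 \in orth (SQ v f) (cobspace v f a) ->
  A2 \in orth (SQ v f) (cobspace v f a) -> symdiff A1 A2 \in orth (SQ v f) (cobspace v f a).
Proof.
rewrite !inE => /andP[S1 /forall_inP O1] /andP[S2 /forall_inP O2]; apply/andP; split.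
  apply/subsetP => s; rewrite in_symdiff.
  case E: (s \in A1) => /= H; [exact: (subsetP S1) | exact: (subsetP S2)].
apply/forall_inP => B HB.
by rewrite symdiff_odd (negbTE (O1 B HB)) (negbTE (O2 B HB)).
Qed.

Lemma F_add W1 W2 : symdiff (cobound f v a W1) (cobound f v a W2) = cobound f v a (symdiff W1 W2).
Proof.
have inv : forall W, (forall x, (pD W (v x) != pD W (v (v x))) = (pD W x != pD W (v x))) /\ (forall x, (pD W (f x) != pD W (v (f x))) = (pD W x != pD W (v x))).
  move=> W; split=> x; first by rewrite Hvv eq_sym.
  by rewrite pD_f Hvf pD_f.
rewrite !coboundD sqset_xor; try by case: (inv W1). all: try by case: (inv W2).
apply: sqset_eq => x; rewrite /pD !in_symdiff.
by case: (cyc f a x \in W1); case: (cyc f a x \in W2); case: (cyc f a (v x) \in W1); case: (cyc f a (v x) \in W2).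
Qed.

Lemma Z_add W1 W2 : symdiff (cobound z f a W1) (cobound z f a W2) = cobound z f a (symdiff W1 W2).
Proof.
have inv : forall W, (forall x, (pZ W (v x) != pZ W (v (v x))) = (pZ W x != pZ W (v x))) /\ (forall x, (pZ W (f x) != pZ W (v (f x))) = (pZ W x != pZ W (v x))).
  move=> W; split=> x; first by rewrite Hvv eq_sym.
  by rewrite pZ_f -/(z x) pZ_z eq_sym.
rewrite !coboundZ sqset_xor; try by case: (inv W1). all: try by case: (inv W2).
apply: sqset_eq => x; rewrite /pZ !in_symdiff.
by case: (cyc z a x \in W1); case: (cyc z a x \in W2); case: (cyc z a (v x) \in W1); case: (cyc z a (v x) \in W2).
Qed.

Lemma addsp_F A C : A \in addsp (cobspace f v a) (cobspace z f a) -> C \in cobspace f v a ->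
  symdiff A C \in addsp (cobspace f v a) (cobspace z f a).
Proof.
case/imset2P => X Y /imsetP[W1 _ ->] /imsetP[W2 _ ->] -> /imsetP[W3 _ ->].
rewrite symdiffA (symdiffC (cobound z f a W2)) -symdiffA F_add.
by apply/imset2P; exists (cobound f v a (symdiff W1 W3)) (cobound z f a W2); rewrite // imset_f.
Qed.

Lemma addsp_Z A C : A \in addsp (cobspace f v a) (cobspace z f a) -> C \in cobspace z f a ->
  symdiff A C \in addsp (cobspace f v a) (cobspace z f a).
Proof.
case/imset2P => X Y /imsetP[W1 _ ->] /imsetP[W2 _ ->] -> /imsetP[W3 _ ->].
rewrite symdiffA Z_add.
by apply/imset2P; exists (cobound f v a W1) (cobound z f a (symdiff W2 W3)); rewrite // imset_f.
Qed.

Lemma cobound0 (g h k : T -> T) : cobound g h k set0 = set0.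
Proof. by apply/setP => s; rewrite inE; apply/imsetP => [][x]; rewrite !inE. Qed.

Lemma addsp0 : set0 \in addsp (cobspace f v a) (cobspace z f a).
Proof.
apply/imset2P; exists (cobound f v a set0) (cobound z f a set0); rewrite ?imset_f //.
by rewrite !cobound0; apply/setP => s; rewrite in_symdiff !inE.
Qed.

End Gen.


Section Coord.
Variable T : finType.
Variable K : nat.
Local Notation N := K.+1.
Variables v f a : T -> T.
Variables vtx nbr : T -> nat.
Variable side : T -> bool.
Hypothesis HvV : forall x, vtx (v x) = vtx x.
Hypothesis HvN : forall x, nbr (v x) = nbr x.
Hypothesis HvS : forall x, side (v x) = ~~ side x.
Hypothesis HfV : forall x, vtx (f x) = nbr x.
Hypothesis HfN : forall x, nbr (f x) = vtx x.
Hypothesis HfS : forall x, side (f x) = side x (+) ((vtx x + nbr x) %% 2 == 0).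
Hypothesis HaV : forall x, vtx (a x) = vtx x.
Hypothesis Haa : forall x, a (a x) = x.
Hypothesis HaS : forall x, side (a x) = ~~ side x.
Hypothesis HaN1 : forall x, side x -> (nbr x).+1 < N -> (nbr x).+1 != vtx x -> nbr (a x) = (nbr x).+1.
Hypothesis HaN2 : forall x, side x -> (nbr x).+1 = vtx x -> (vtx x).+1 < N -> nbr (a x) = (vtx x).+1.
Hypothesis Hinj : forall x y, vtx x = vtx y -> nbr x = nbr y -> side x = side y -> x = y.
Hypothesis HbV : forall x, vtx x < N.
Hypothesis HbN : forall x, nbr x < N.
Hypothesis Hne : forall x, vtx x != nbr x.
Hypothesis Hex : forall i j s, i < N -> j < N -> i != j ->
  exists x, [/\ vtx x = i, nbr x = j & side x = s].
Hypothesis Hconn : forall x y, vtx x = vtx y -> connect (rel2 v a) x y.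

Lemma Hvv x : v (v x) = x. Proof. by apply: Hinj; rewrite ?HvV ?HvN ?HvS ?negbK. Qed.
Lemma Hff x : f (f x) = x.
Proof. apply: Hinj; rewrite ?HfS ?HfV ?HfN //; lia. Qed.
Lemma Hvf x : v (f x) = f (v x).
Proof. apply: Hinj; rewrite ?HvS ?HfS ?HvV ?HvN ?HfV ?HfN ?HvS ?HfS ?HvV ?HvN ?HfV ?HfN //; lia. Qed.

Lemma Hmap : is_map v f a.
Proof.
split.
- split; first exact: Hvv. move=> x; apply/eqP => E; have := HvS x; rewrite E; by case: (side x).
- split; first exact: Hff. move=> x; apply/eqP => E; have := HfV x; rewrite E => H; move: (Hne x); by rewrite H eqxx.
- split; first exact: Haa. move=> x; apply/eqP => E; have := HaS x; rewrite E; by case: (side x).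
- move=> x; split; last exact: Hvf.
  apply/eqP => E; have := HfV x; rewrite -E HvV => H; move: (Hne x); by rewrite H eqxx.
Qed.

Definition lo x := minn (vtx x) (nbr x).
Definition hi x := maxn (vtx x) (nbr x).

Lemma sq_char x : sq v f x = [set y | (lo y == lo x) && (hi y == hi x)].
Proof.
apply/setP => y; rewrite !inE; apply/idP/idP.
  move/(inv_connect (P := fun y => (lo y == lo x) && (hi y == hi x))) => <-.
  - by rewrite !eqxx.
  - by move=> u; rewrite /lo /hi HvV HvN.
  - by move=> u; rewrite /lo /hi HfV HfN minnC maxnC.
move=> H.
have [[E1 E2]|[E1 E2]] : (vtx y = vtx x /\ nbr y = nbr x) \/ (vtx y = nbr x /\ nbr y = vtx x).
  move: H (Hne x) (Hne y); rewrite /lo /hi; lia.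
- case: (boolP (side y == side x)) => [/eqP S|S].
    by rewrite (Hinj E1 E2 S) connect0.
  have -> : y = v x by apply: Hinj; rewrite ?HvV ?HvN ?HvS //; move: S; case: (side y); case: (side x).
  by apply: connect1; rewrite /rel2 eqxx.
- case: (boolP (side y == side (f x))) => [/eqP S|S].
    rewrite (_ : y = f x); last by apply: Hinj; rewrite ?HfV ?HfN.
    by apply: connect1; rewrite /rel2 eqxx orbT.
  have -> : y = v (f x).
    by apply: Hinj; rewrite ?HvV ?HvN ?HvS ?HfV ?HfN //; move: S; case: (side y); case: (side (f x)).
  apply: (@connect_trans _ _ (f x)); apply: connect1; by rewrite /rel2 eqxx ?orbT.
Qed.

Lemma cyc_char x : cyc v a x = [set y | vtx y == vtx x].
Proof.
apply/setP => y; rewrite !inE; apply/idP/idP.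
  move/(inv_connect (P := fun y => vtx y == vtx x)) => <-.
  - by rewrite eqxx.
  - by move=> u; rewrite HvV.
  - by move=> u; rewrite HaV.
by move/eqP => E; apply: Hconn.
Qed.

Lemma a_prev x : ~~ side x -> 0 < nbr x -> (nbr x).-1 != vtx x -> nbr (a x) = (nbr x).-1.
Proof.
move=> S H1 H2.
have b1 : (nbr x).-1 < N by move: (HbN x); lia.
have b2 : vtx x != (nbr x).-1 by rewrite eq_sym.
have [w [w1 w2 w3]] := Hex true (HbV x) b1 b2.
have aw : a w = x.
  apply: Hinj; rewrite ?HaV ?HaS ?w1 ?w3 //; last by rewrite (negbTE S).
  rewrite HaN1 ?w1 ?w2 ?w3 //; move: (Hne x) (HbN x) (HbV x) H1 H2 w1 w2 w3; lia.
by rewrite -{1}aw Haa w2.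
Qed.

Lemma a_prev2 x : ~~ side x -> nbr x = (vtx x).+1 -> 0 < vtx x -> nbr (a x) = (vtx x).-1.
Proof.
move=> S H1 H2.
have b1 : (vtx x).-1 < N by move: (HbV x); lia.
have b2 : vtx x != (vtx x).-1 by lia.
have [w [w1 w2 w3]] := Hex true (HbV x) b1 b2.
have aw : a w = x.
  apply: Hinj; rewrite ?HaV ?HaS ?w1 ?w3 //; last by rewrite (negbTE S).
  rewrite HaN2 ?w1 ?w2 ?w3 //; move: (Hne x) (HbN x) (HbV x) H1 H2 w1 w2 w3; lia.
by rewrite -{1}aw Haa w2.
Qed.

Definition Wk k := [set cyc v a x | x in T & vtx x == k].

Lemma pV_star k y : pV v a (Wk k) y = (vtx y == k).
Proof.
apply/imsetP/idP => [[x]|H]; last by exists y; rewrite ?inE.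
rewrite inE => /andP[_ /eqP <-] E.
have : y \in cyc v a x by rewrite -E inE connect0.
by rewrite cyc_char inE.
Qed.

Lemma star_cob k : cobound v f a (Wk k) = [set sq v f y | y in T & (vtx y == k) || (nbr y == k)].
Proof.
rewrite coboundV; apply: sqset_eq => y; rewrite !pV_star HfV.
by move: (Hne y); lia.
Qed.

Lemma pD_face (X : {set T}) y : (forall x, x \in X -> f x \in X) -> (forall x, x \in X -> a x \in X) ->
  pD f a [set cyc f a x | x in X] y = (y \in X).
Proof.
move=> Xf Xa; apply/imsetP/idP => [[x xX E]|H]; last by exists y.
have : y \in cyc f a x by rewrite -E inE connect0.
rewrite inE => /(inv_connect (P := fun u => u \in X)) <- //.
- move=> u; apply/idP/idP => H; last exact: Xf.
  by rewrite -(Hff u); apply: Xf.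
- move=> u; apply/idP/idP => H; last exact: Xa.
  by rewrite -(Haa u); apply: Xa.
Qed.

Lemma pZ_face (X : {set T}) y : (forall x, x \in X -> zdiag v f x \in X) -> (forall x, x \in X -> a x \in X) ->
  pZ v f a [set cyc (zdiag v f) a x | x in X] y = (y \in X).
Proof.
move=> Xf Xa; apply/imsetP/idP => [[x xX E]|H]; last by exists y.
have : y \in cyc (zdiag v f) a x by rewrite -E inE connect0.
have Hzz : forall u, zdiag v f (zdiag v f u) = u by move=> u; rewrite /zdiag -Hvf Hvv Hff.
rewrite inE => /(inv_connect (P := fun u => u \in X)) <- //.
- move=> u; apply/idP/idP => H; last exact: Xf.
  by rewrite -(Hzz u); apply: Xf.
- move=> u; apply/idP/idP => H; last exact: Xa.
  by rewrite -(Haa u); apply: Xa.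
Qed.

Definition FZstep (C : {set {set T}}) := C \in cobspace f v a \/ C \in cobspace (zdiag v f) f a.

Lemma faceD (X : {set T}) : (forall x, x \in X -> f x \in X) -> (forall x, x \in X -> a x \in X) ->
  FZstep [set sq v f y | y in T & (y \in X) != (v y \in X)].
Proof.
move=> Xf Xa; left; apply/imsetP; exists [set cyc f a x | x in X] => //.
rewrite coboundD; apply: sqset_eq => y; by rewrite !pD_face.
Qed.

Lemma faceZ (X : {set T}) : (forall x, x \in X -> zdiag v f x \in X) -> (forall x, x \in X -> a x \in X) ->
  FZstep [set sq v f y | y in T & (y \in X) != (v y \in X)].
Proof.
move=> Xf Xa; right; apply/imsetP; exists [set cyc (zdiag v f) a x | x in X] => //.
rewrite (coboundZ Hmap); apply: sqset_eq => y; by rewrite !pZ_face.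
Qed.

Definition qdir i j p q :=
  [|| (p == i) && (q == j), (p == i) && (q == j.+1), (p == j) && (q == i),
      (p == j) && (q == i.+1), (p == i.+1) && (q == j),
      (p == i.+1) && (q == j.+1), (p == j.+1) && (q == i)
    | (p == j.+1) && (q == i.+1)].
Definition qside i j (q : nat) := (q == i) || (q == j).

Definition Qe i j l h := [|| (l == i) && (h == j), (l == i) && (h == j.+1), (l == i.+1) && (h == j)
  | (l == i.+1) && (h == j.+1)].

Ltac solve2 H := move: H => /andP[/eqP ? /eqP ?]; subst; lia.
Ltac dsplit H := first [ case/orP: H => H; [ solve2 H | dsplit H ] | solve2 H ].

Lemma qdir_Qe i j p q : i.+1 < j -> p != q -> qdir i j p q = Qe i j (minn p q) (maxn p q).
Proof.
move=> Hij Hpq; apply/idP/idP => H; rewrite /qdir /Qe in H *; dsplit H.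
Qed.

Lemma qdir_f i j p q (s : bool) : i.+1 < j -> (i + j) %% 2 == 1 -> qdir i j p q -> s == qside i j q ->
  qdir i j q p && (s (+) ((p + q) %% 2 == 0) == qside i j p).
Proof. move=> Hij Hp H S; rewrite /qdir /qside in H S *; dsplit H. Qed.

Lemma qdir_z i j p q (s : bool) : i.+1 < j -> (i + j) %% 2 != 1 -> qdir i j p q -> s == qside i j q ->
  qdir i j q p && (~~ (s (+) ((p + q) %% 2 == 0)) == qside i j p).
Proof. move=> Hij Hp H S; rewrite /qdir /qside in H S *; dsplit H. Qed.

Lemma qdir_a1 i j p q : i.+1 < j -> j.+1 < N -> qdir i j p q -> true == qside i j q ->
  [&& q.+1 < N, q.+1 != p & qdir i j p q.+1 && (false == qside i j q.+1)].
Proof. move=> Hij HjN H S; rewrite /qdir /qside in H S *; dsplit H. Qed.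

Lemma qdir_a0 i j p q : i.+1 < j -> j.+1 < N -> qdir i j p q -> false == qside i j q ->
  [&& 0 < q, q.-1 != p & qdir i j p q.-1 && (true == qside i j q.-1)].
Proof. move=> Hij HjN H S; rewrite /qdir /qside in H S *; dsplit H. Qed.

Lemma Qface i j : i.+1 < j -> j.+1 < N -> FZstep [set sq v f y | y in T & Qe i j (lo y) (hi y)].
Proof.
move=> Hij HjN.
pose X := [set y | qdir i j (vtx y) (nbr y) && (side y == qside i j (nbr y))].
have -> : [set sq v f y | y in T & Qe i j (lo y) (hi y)] = [set sq v f y | y in T & (y \in X) != (v y \in X)].
  apply: sqset_eq => y; rewrite !inE HvV HvN HvS /lo /hi -qdir_Qe ?Hne //.
  by case: (qdir _ _ _ _); case: (side y); case: (qside _ _ _).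
have Xa : forall y, y \in X -> a y \in X.
  move=> y; rewrite !inE HaV HaS => /andP[H S]; case Sy: (side y).
    rewrite Sy in S; case/and3P: (qdir_a1 Hij HjN H S) => h1 h2 h3.
    by rewrite HaN1 ?Sy.
  rewrite Sy in S; case/and3P: (qdir_a0 Hij HjN H S) => h1 h2 h3.
  by rewrite a_prev ?Sy.
case: (boolP ((i + j) %% 2 == 1)) => Hp.
  apply: faceD => // y; rewrite !inE HfV HfN HfS => /andP[H S].
  exact: qdir_f.
apply: faceZ => // y; rewrite /zdiag !inE HvV HvN HvS HfV HfN HfS => /andP[H S].
exact: qdir_z.
Qed.

Definition tdir i p q :=
  [|| (p == i) && (q == i.+1), (p == i) && (q == i.+2), (p == i.+1) && (q == i),
      (p == i.+1) && (q == i.+2), (p == i.+2) && (q == i)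
    | (p == i.+2) && (q == i.+1)].
Definition tside i p q := (q == i) || ((p == i) && (q == i.+1)).

Definition Te i l h := [|| (l == i) && (h == i.+1), (l == i.+1) && (h == i.+2) | (l == i) && (h == i.+2)].

Lemma tdir_Te i p q : p != q -> tdir i p q = Te i (minn p q) (maxn p q).
Proof. move=> Hpq; apply/idP/idP => H; rewrite /tdir /Te in H *; dsplit H. Qed.

Lemma tdir_f i p q (s : bool) : tdir i p q -> s == tside i p q ->
  tdir i q p && (s (+) ((p + q) %% 2 == 0) == tside i q p).
Proof. move=> H S; rewrite /tdir /tside in H S *; dsplit H. Qed.

Lemma tdir_a1 i p q : i.+2 < N -> tdir i p q -> true == tside i p q ->
  [&& q.+1 == p, p.+1 < N & tdir i p p.+1 && (false == tside i p p.+1)] ||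
  [&& q.+1 < N, q.+1 != p & tdir i p q.+1 && (false == tside i p q.+1)].
Proof. move=> HiN H S; rewrite /tdir /tside in H S *; dsplit H. Qed.

Lemma tdir_a0 i p q : tdir i p q -> false == tside i p q ->
  [&& q == p.+1, 0 < p & tdir i p p.-1 && (true == tside i p p.-1)] ||
  [&& 0 < q, q.-1 != p & tdir i p q.-1 && (true == tside i p q.-1)].
Proof. move=> H S; rewrite /tdir /tside in H S *; dsplit H. Qed.

Lemma Tface i : i.+2 < N -> FZstep [set sq v f y | y in T & Te i (lo y) (hi y)].
Proof.
move=> HiN.
pose X := [set y | tdir i (vtx y) (nbr y) && (side y == tside i (vtx y) (nbr y))].
have -> : [set sq v f y | y in T & Te i (lo y) (hi y)] = [set sq v f y | y in T & (y \in X) != (v y \in X)].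
  apply: sqset_eq => y; rewrite !inE HvV HvN HvS /lo /hi -tdir_Te ?Hne //.
  by case: (tdir _ _ _); case: (side y); case: (tside _ _ _).
apply: faceD => y; rewrite !inE.
  by rewrite HfV HfN HfS => /andP[H S]; apply: tdir_f.
rewrite HaV HaS => /andP[H S]; case Sy: (side y).
  rewrite Sy in S; case/orP: (tdir_a1 HiN H S) => /and3P[h1 h2 h3].
    by rewrite HaN2 ?Sy // (eqP h1).
  by rewrite HaN1 ?Sy.
rewrite Sy in S; case/orP: (tdir_a0 H S) => /and3P[h1 h2 h3].
  by rewrite a_prev2 ?Sy // (eqP h1).
by rewrite a_prev ?Sy.
Qed.

Definition sdist (s : {set T}) := if [pick y in s] is Some y then hi y - lo y else 0.

Lemma sdist_sq x : sdist (sq v f x) = hi x - lo x.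
Proof.
rewrite /sdist; case: pickP => [y|H]; last by move: (H x); rewrite inE connect0.
by rewrite sq_char inE => /andP[/eqP-> /eqP->].
Qed.

Lemma sq_eq x y : lo x = lo y -> hi x = hi y -> sq v f x = sq v f y.
Proof. by move=> E1 E2; rewrite !sq_char E1 E2. Qed.

Local Notation OR := (orth (SQ v f) (cobspace v f a)).
Local Notation AD := (addsp (cobspace f v a) (cobspace (zdiag v f) f a)).

Lemma step A C : A \in AD -> FZstep C -> symdiff A C \in AD.
Proof. by move=> HA [H|H]; [apply: (addsp_F Hmap) | apply: (addsp_Z Hmap)]. Qed.

Lemma FZ_orth C : FZstep C -> C \in OR.
Proof.
move=> H; have := step (addsp0 v f a) H; rewrite (_ : symdiff set0 C = C).
  exact: (addsp_orth Hmap).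
by apply/setP => s; rewrite in_symdiff inE.
Qed.

Lemma orth_sq A s : A \in OR -> s \in A -> exists y, s = sq v f y.
Proof. by rewrite inE => /andP[/subsetP H _] /H /imsetP[y _ ->]; exists y. Qed.

Lemma orth_star A k : A \in OR ->
  ~~ odd #|A :&: [set sq v f y | y in T & (vtx y == k) || (nbr y == k)]|.
Proof.
rewrite inE => /andP[_ /forall_inP H]; rewrite -star_cob; apply: H.
exact: imset_f.
Qed.

Lemma star_mem k x : (sq v f x \in [set sq v f y | y in T & (vtx y == k) || (nbr y == k)]) =
  (vtx x == k) || (nbr x == k).
Proof.
rewrite mem_sqset // => u; rewrite ?HvV ?HvN ?HfV ?HfN //; by rewrite orbC.
Qed.

Lemma base A : A \in OR -> (forall s, s \in A -> sdist s <= 1) -> A = set0.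
Proof.
move=> HA Hd.
have key : forall k y, lo y = k -> hi y = k.+1 -> sq v f y \notin A.
  elim=> [|k IH] y Hl Hh; apply/negP => yA.
    have E : A :&: [set sq v f y | y in T & (vtx y == 0) || (nbr y == 0)] = [set sq v f y].
      apply/setP => s; rewrite !inE; apply/andP/eqP => [[sA]|->]; last first.
        by rewrite yA star_mem; move: Hl; rewrite /lo; lia.
      have [x Ex] := orth_sq HA sA; rewrite Ex star_mem => H0.
      have := Hd _ sA; rewrite Ex sdist_sq => H1.
      apply: sq_eq; move: H0 H1 Hl Hh (Hne x); rewrite /lo /hi; lia.
    by have := orth_star 0 HA; rewrite E cards1.
  have E : A :&: [set sq v f y | y in T & (vtx y == k.+1) || (nbr y == k.+1)] = [set sq v f y].
    apply/setP => s; rewrite !inE; apply/andP/eqP => [[sA]|->]; last first.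
      by rewrite yA star_mem; move: Hl; rewrite /lo; lia.
    have [x Ex] := orth_sq HA sA; rewrite Ex star_mem => H0.
    have := Hd _ sA; rewrite Ex sdist_sq => H1.
    case: (boolP (lo x == k)) => Hk.
      have H2 : hi x = k.+1 by move: H0 H1 Hk Hl Hh (Hne x); rewrite /lo /hi; lia.
      by move: (IH x (eqP Hk) H2); rewrite -Ex sA.
    apply: sq_eq; move: H0 H1 Hk Hl Hh (Hne x); rewrite /lo /hi; lia.
  by have := orth_star k.+1 HA; rewrite E cards1.
apply/setP => s; rewrite inE; apply/negbTE/negP => sA.
have [x Ex] := orth_sq HA sA.
have := Hd _ sA; rewrite Ex sdist_sq => H1.
have H2 : hi x = (lo x).+1 by move: H1 (Hne x); rewrite /lo /hi; lia.
by move: (key _ x erefl H2); rewrite -Ex sA.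
Qed.

Lemma red_step D c A y (Cp : pred T) :
  (forall A', A' \in OR -> (forall s, s \in A' -> sdist s <= D.+1) ->
     #|[set s in A' | sdist s == D.+1]| = c -> A' \in AD) ->
  A \in OR -> (forall s, s \in A -> sdist s <= D.+1) -> #|[set s in A | sdist s == D.+1]| = c.+1 ->
  sq v f y \in A -> sdist (sq v f y) = D.+1 -> FZstep [set sq v f x | x in T & Cp x] ->
  (forall x, Cp x -> hi x - lo x <= D.+1) ->
  (forall x, Cp x -> hi x - lo x = D.+1 -> sq v f x = sq v f y) -> Cp y -> A \in AD.
Proof.
move=> IH HA Hb Hc yA yd HC P2 P3 P4.
set C := [set sq v f x | x in T & Cp x] in HC.
have yC : sq v f y \in C by apply: imset_f; rewrite inE.
have A'OR : symdiff A C \in OR by apply: (orth_symdiff HA (FZ_orth HC)).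
suff : symdiff A C \in AD by move/step => /(_ _ HC); rewrite symdiffK.
apply: IH => //.
  move=> s; rewrite in_symdiff; case sA: (s \in A) => /= H; first exact: Hb.
  by move: H => /imsetP[x]; rewrite inE => Cx ->; rewrite sdist_sq; apply: P2.
have -> : [set s in symdiff A C | sdist s == D.+1] = [set s in A | sdist s == D.+1] :\ sq v f y.
  apply/setP => s; rewrite [in LHS]inE in_symdiff !inE.
  case: (eqVneq s (sq v f y)) => [->|ne]; first by rewrite yA yC.
  case sC: (s \in C); last by rewrite addbF.
  move: sC => /imsetP[x Cx0 Es].
  have Cx : Cp x by move: Cx0; rewrite inE; case/andP.
  case: (eqVneq (sdist s) D.+1) => ds; last by rewrite !andbF.
  have E3 : hi x - lo x = D.+1 by rewrite -sdist_sq -Es.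
  by move: ne; rewrite Es (P3 x Cx E3) eqxx.
move: Hc; rewrite (cardsD1 (sq v f y)) inE yA yd eqxx /= add1n; by case.
Qed.

Lemma red D : forall c A, A \in OR -> (forall s, s \in A -> sdist s <= D) ->
  #|[set s in A | sdist s == D]| = c -> A \in AD.
Proof.
elim: D => [|D IHD] c A HA Hb Hc.
  rewrite (base HA) ?addsp0 // => s /Hb; lia.
case: (eqVneq D 0) => [D0|Dn0].
  rewrite (base HA) ?addsp0 // => s /Hb; lia.
elim: c A HA Hb Hc => [|c IHc] A HA Hb Hc.
  apply: (IHD _ _ HA _ erefl) => s sA.
  have := Hb s sA; case: (eqVneq (sdist s) D.+1) => [E|]; last lia.
  have : 0 < #|[set s in A | sdist s == D.+1]| by apply/card_gt0P; exists s; rewrite inE sA E eqxx.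
  by rewrite Hc.
have [s0] : exists s0, s0 \in [set s in A | sdist s == D.+1].
  by apply/card_gt0P; rewrite Hc.
rewrite inE => /andP[s0A /eqP s0d].
have [y Ey] := orth_sq HA s0A; rewrite Ey in s0A s0d.
have yd := s0d; rewrite sdist_sq in yd.
have hiN : hi y < N by rewrite /hi; move: (HbV y) (HbN y); lia.
case: (eqVneq D 1) => [D1|Dn1].
  apply: (@red_step D c A y (fun x => Te (lo y) (lo x) (hi x))) => //.
  - apply: Tface; move: yd hiN; rewrite /lo /hi; lia.
  - by move=> x; rewrite /Te; lia.
  - move=> x Hx H2; apply: sq_eq; move: Hx H2 yd; rewrite /Te; lia.
  - by rewrite /Te; move: yd; lia.
apply: (@red_step D c A y (fun x => Qe (lo y) (hi y).-1 (lo x) (hi x))) => //.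
- apply: Qface; move: yd hiN Dn1 Dn0; rewrite /lo /hi; lia.
- by move=> x; rewrite /Qe; move: yd; lia.
- move=> x Hx H2; apply: sq_eq; move: Hx H2 yd; rewrite /Qe; lia.
- by rewrite /Qe; move: yd; lia.
Qed.

Lemma rich_coord : rich v f a.
Proof.
apply/setP => A; apply/idP/idP => HA; last exact: (addsp_orth Hmap).
apply: (red (D := N) (c := #|[set s in A | sdist s == N]|) HA) => // s sA.
have [x ->] := orth_sq HA sA; rewrite sdist_sq /hi /lo.
by move: (HbV x) (HbN x); lia.
Qed.

Lemma inord_eq (m n : nat) : m < N -> n < N -> (inord m == inord n :> 'I_N) = (m == n).
Proof.
move=> Hm Hn; apply/eqP/eqP => [E|->] //.
by rewrite -(inordK Hm) -(inordK Hn) E.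
Qed.

Definition phV (c : {set T}) : 'I_N := inord (if [pick y in c] is Some y then vtx y else 0).
Definition phE (s : {set T}) : {set 'I_N} :=
  if [pick y in s] is Some y then [set inord (vtx y); inord (nbr y)] else set0.

Lemma phV_cyc x : phV (cyc v a x) = inord (vtx x).
Proof.
rewrite /phV; case: pickP => [y|H]; last by move: (H x); rewrite inE connect0.
by rewrite cyc_char inE => /eqP->.
Qed.

Lemma phE_sq x : phE (sq v f x) = [set inord (vtx x); inord (nbr x)].
Proof.
rewrite /phE; case: pickP => [y|H]; last by move: (H x); rewrite inE connect0.
rewrite sq_char inE /lo /hi => H.
have [[E1 E2]|[E1 E2]] : (vtx y = vtx x /\ nbr y = nbr x) \/ (vtx y = nbr x /\ nbr y = vtx x).
  move: H (Hne x) (Hne y); lia.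
  by rewrite E1 E2.
by rewrite E1 E2 setUC.
Qed.

Lemma iso_coord : 0 < K -> iso_complete v f a N.
Proof.
move=> HK; exists phV, phE; split.
- move=> c1 c2 /imsetP[x1 _ ->] /imsetP[x2 _ ->]; rewrite !phV_cyc => /eqP.
  rewrite inord_eq // => /eqP E.
  by rewrite !cyc_char E.
- move=> i.
  have b1 : (if val i == 0 then 1 else 0) < N by case: (val i == 0).
  have b2 : val i != (if val i == 0 then 1 else 0) by move: (val i) => [|m].
  have [x [x1 x2 x3]] := Hex true (ltn_ord i) b1 b2.
  exists (cyc v a x); first exact: imset_f.
  by rewrite phV_cyc x1 inord_val.
- move=> s1 s2 /imsetP[x1 _ ->] /imsetP[x2 _ ->]; rewrite !phE_sq => E.
  have m1 : inord (vtx x1) \in [set inord (vtx x2); inord (nbr x2) : 'I_N] by rewrite -E !inE eqxx.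
  have m2 : inord (nbr x1) \in [set inord (vtx x2); inord (nbr x2) : 'I_N] by rewrite -E !inE eqxx orbT.
  have m3 : inord (vtx x2) \in [set inord (vtx x1); inord (nbr x1) : 'I_N] by rewrite E !inE eqxx.
  have m4 : inord (nbr x2) \in [set inord (vtx x1); inord (nbr x1) : 'I_N] by rewrite E !inE eqxx orbT.
  move: m1 m2 m3 m4; rewrite !inE !inord_eq // => m1 m2 m3 m4.
  by apply: sq_eq; move: m1 m2 m3 m4 (Hne x1) (Hne x2); rewrite /lo /hi; lia.
- move=> S /eqP /cards2P [i [j [ij ->]]].
  have [x [x1 x2 x3]] := Hex true (ltn_ord i) (ltn_ord j) ij.
  exists (sq v f x); first exact: imset_f.
  by rewrite phE_sq x1 x2 !inord_val.
- move=> x; rewrite phE_sq !phV_cyc HfV cards2 inord_eq // Hne; split => //.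
Qed.

End Coord.


Section Concrete.
Variable p : nat.
Definition Pt := ('I_p.+2 * 'I_p.+1 * bool)%type.

Definition nbrP (x : Pt) : nat :=
  if x.1.1 + x.1.2 + 1 < p.+2 then x.1.1 + x.1.2 + 1 else x.1.1 + x.1.2 + 1 - p.+2.
Definition vP (x : Pt) : Pt := (x.1.1, x.1.2, ~~ x.2).
Definition fP (x : Pt) : Pt :=
  (inord (nbrP x), inord (p - x.1.2), x.2 (+) ((x.1.1 + nbrP x) %% 2 == 0)).
Definition aP (x : Pt) : Pt :=
  if x.2 then (x.1.1, inord (if x.1.2 < p then x.1.2 + 1 else 0), false)
  else (x.1.1, inord (if 0 < x.1.2 then x.1.2 - 1 else p), true).

Lemma Pt_eq (x y : Pt) : val x.1.1 = val y.1.1 -> val x.1.2 = val y.1.2 -> x.2 = y.2 -> x = y.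
Proof. by case: x => [[i k] s]; case: y => [[i' k'] s'] /= /val_inj -> /val_inj -> ->. Qed.

Lemma nbrP_lt x : nbrP x < p.+2.
Proof. case: x => [[i k] s]; rewrite /nbrP /=; move: (ltn_ord i) (ltn_ord k); case: ifP; lia. Qed.

Lemma nbrP_ne x : val x.1.1 != nbrP x.
Proof. case: x => [[i k] s]; rewrite /nbrP /=; move: (ltn_ord i) (ltn_ord k); case: ifP; lia. Qed.

Local Notation T := 'I_#|{: Pt}|.
Definition dec (x : T) : Pt := enum_val x.
Definition vT (x : T) : T := enum_rank (vP (dec x)).
Definition fT (x : T) : T := enum_rank (fP (dec x)).
Definition aT (x : T) : T := enum_rank (aP (dec x)).
Definition vtxT (x : T) : nat := val (dec x).1.1.
Definition nbrT (x : T) : nat := nbrP (dec x).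
Definition sideT (x : T) : bool := (dec x).2.

Lemma decK y : dec (enum_rank y) = y. Proof. exact: enum_rankK. Qed.

Lemma cHvV x : vtxT (vT x) = vtxT x. Proof. by rewrite /vtxT /vT decK. Qed.
Lemma cHvN x : nbrT (vT x) = nbrT x. Proof. by rewrite /nbrT /vT decK. Qed.
Lemma cHvS x : sideT (vT x) = ~~ sideT x. Proof. by rewrite /sideT /vT decK. Qed.
Lemma cHfV x : vtxT (fT x) = nbrT x.
Proof. by rewrite /vtxT /fT decK /= inordK // nbrP_lt. Qed.
Lemma cHfN x : nbrT (fT x) = vtxT x.
Proof.
rewrite /nbrT /vtxT /fT decK; case: (dec x) => [[i k] s].
rewrite {1}/nbrP /= inordK ?nbrP_lt // inordK; last by move: (ltn_ord k); lia.
rewrite /nbrP /=; move: (ltn_ord i) (ltn_ord k); do 2 case: ifP; lia.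
Qed.
Lemma cHfS x : sideT (fT x) = sideT x (+) ((vtxT x + nbrT x) %% 2 == 0).
Proof. by rewrite /sideT /fT decK. Qed.
Lemma cHaV x : vtxT (aT x) = vtxT x.
Proof. by rewrite /vtxT /aT decK /aP; case: ((dec x).2). Qed.
Lemma cHaS x : sideT (aT x) = ~~ sideT x.
Proof. by rewrite /sideT /aT decK /aP; case: ((dec x).2). Qed.
Lemma cHaa x : aT (aT x) = x.
Proof.
rewrite /aT decK -[RHS](enum_valK x) -/(dec x); congr enum_rank.
case: (dec x) => [[i k] s]; apply: Pt_eq; rewrite /aP; case: s => //=;
  rewrite !inordK; move: (ltn_ord k); try (case: ifP); try (case: ifP); lia.
Qed.
Lemma cHaN1 x : sideT x -> (nbrT x).+1 < p.+2 -> (nbrT x).+1 != vtxT x -> nbrT (aT x) = (nbrT x).+1.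
Proof.
rewrite /sideT /nbrT /vtxT /aT decK; case: (dec x) => [[i k] s] /= ->.
rewrite /aP /nbrP /= inordK; last by move: (ltn_ord k); case: ifP; lia.
move: (ltn_ord i) (ltn_ord k); do 3 case: ifP; lia.
Qed.
Lemma cHaN2 x : sideT x -> (nbrT x).+1 = vtxT x -> (vtxT x).+1 < p.+2 -> nbrT (aT x) = (vtxT x).+1.
Proof.
rewrite /sideT /nbrT /vtxT /aT decK; case: (dec x) => [[i k] s] /= ->.
rewrite /aP /nbrP /= inordK; last by move: (ltn_ord k); case: ifP; lia.
move: (ltn_ord i) (ltn_ord k); do 3 case: ifP; lia.
Qed.
Lemma cHinj x y : vtxT x = vtxT y -> nbrT x = nbrT y -> sideT x = sideT y -> x = y.
Proof.
rewrite /vtxT /nbrT /sideT => E1 E2 E3.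
rewrite -(enum_valK x) -(enum_valK y) -!/(dec _); congr enum_rank.
move: E1 E2 E3; case: (dec x) => [[i k] s]; case: (dec y) => [[i' k'] s'] /= E1 E2 E3.
apply: Pt_eq => //=.
move: E2; rewrite /nbrP /= E1; move: (ltn_ord i') (ltn_ord k) (ltn_ord k'); do 2 case: ifP; lia.
Qed.
Lemma cHbV x : vtxT x < p.+2. Proof. exact: ltn_ord. Qed.
Lemma cHbN x : nbrT x < p.+2. Proof. exact: nbrP_lt. Qed.
Lemma cHne x : vtxT x != nbrT x. Proof. exact: nbrP_ne. Qed.
Lemma cHex i j s : i < p.+2 -> j < p.+2 -> i != j ->
  exists x, [/\ vtxT x = i, nbrT x = j & sideT x = s].
Proof.
move=> Hi Hj Hij.
pose k := if i < j then j - i - 1 else j + p.+2 - i - 1.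
have Hk : k < p.+1 by rewrite /k; case: ifP; lia.
exists (enum_rank ((inord i, inord k, s) : Pt)); rewrite /vtxT /nbrT /sideT decK /= inordK //; split => //.
rewrite /nbrP /= !inordK // /k; move: Hk; do 2 case: ifP; lia.
Qed.

Lemma rel2_sym : symmetric (rel2 vT aT).
Proof.
have vv : forall x, vT (vT x) = x.
  by move=> x; apply: cHinj; rewrite ?cHvV ?cHvN ?cHvS ?negbK.
move=> x y; rewrite /rel2; apply/idP/idP => /orP[]/eqP->; by rewrite ?vv ?cHaa eqxx ?orbT.
Qed.

Lemma cHconn x y : vtxT x = vtxT y -> connect (rel2 vT aT) x y.
Proof.
have base : forall (i : 'I_p.+2) k s, k < p.+1 ->
    connect (rel2 vT aT) (enum_rank ((i, ord0, false) : Pt)) (enum_rank ((i, inord k, s) : Pt)).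
  move=> i; elim=> [|k IH] s Hk.
    have -> : (inord 0 : 'I_p.+1) = ord0 by apply: val_inj; rewrite /= inordK.
    case: s; last exact: connect0.
    apply: connect1; rewrite /rel2 /vT decK /vP /= eqxx //.
  have H1 := IH true (ltnW Hk).
  have H2 : connect (rel2 vT aT) (enum_rank ((i, ord0, false) : Pt)) (enum_rank ((i, inord k.+1, false) : Pt)).
    apply: (connect_trans H1); apply: connect1; rewrite /rel2 /aT decK /aP /= inordK; last lia.
    have -> : (if k < p then k + 1 else 0) = k.+1 by case: ifP; lia.
    by rewrite eqxx orbT.
  case: s => //; apply: (connect_trans H2); apply: connect1.
  by rewrite /rel2 /vT decK /vP /= eqxx.
have gen : forall z, connect (rel2 vT aT) (enum_rank ((inord (vtxT z), ord0, false) : Pt)) z.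
  move=> z; rewrite -{2}(enum_valK z) -/(dec z) /vtxT.
  case: (dec z) => [[i k] s] /=; rewrite inord_val.
  by have := base i k s (ltn_ord k); rewrite inord_val.
move=> E; apply: (connect_trans _ (gen y)); rewrite -E.
by rewrite (sym_connect_sym rel2_sym); apply: gen.
Qed.

Lemma concrete_rich : complete_map_rich p.+2.
Proof.
exists #|{: Pt}|, vT, fT, aT; split.
- exact: (Hmap cHvV cHvN cHvS cHfV cHfN cHfS cHaa cHaS cHinj cHne).
- exact: (rich_coord cHvV cHvN cHvS cHfV cHfN cHfS cHaV cHaa cHaS cHaN1 cHaN2 cHinj cHbV cHbN cHne cHex cHconn).
- exact: (iso_coord cHvV cHvN cHvS cHfV cHfN cHaV cHinj cHbV cHbN cHne cHex cHconn).
Qed.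

End Concrete.

Theorem theorem2p11 : forall n : nat, 1 <= n -> complete_map_rich (2 * n).
Proof.
move=> n Hn; have -> : 2 * n = (2 * n - 2).+2 by lia.
exact: concrete_rich.
Qed.
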